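(* Assume there exist $\gamma\in\mathcal{KL}$ and $\psi:\mathbb R^d\to\mathbb R_+$ with $\overline\psi:=\sup_{x\in X^{\rm in}}\psi(x)\in(0,+\infty)$ such that $\varphi(T^k(x))\le\gamma(\psi(x),k)$ for all $x\in X^{\rm in}$ and all $k\in\mathbb N$. Then: (1) $\limsup_{n\to\infty}\nu_n\le 0$, and if moreover there exist $k\in\mathbb N$ and $x\in X^{\rm in}$ with $\varphi(T^k(x))>0$, then $G^{>}_\nu\neq\emptyset$; (2) there exists $h\in\mathcal K_\infty$ (extended to a function on $\mathbb R$) such that $\nu_k\le h(e^{-k})$ for all $k\in\mathbb N$, i.e. $(h,e^{-1})\in\Gamma(\nu)$, and if moreover there exist $k\in\mathbb N$, $x\in X^{\rm in}$ with $\varphi(T^k(x))>0$, then $\mathcal S(\nu,h)=\{k:\nu_k>h(0)\}\neq\emptyset$.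
   Context: Standing data: a nonempty set $X^{\rm in}\subseteq\mathbb R^d$, a map $T:\mathbb R^d\to\mathbb R^d$ ($T^k$ its $k$-fold composition, $T^0=\mathrm{Id}$), and $\varphi:\mathbb R^d\to\mathbb R$ with $\varphi(0)=0$; $\nu_k=\sup_{x\in X^{\rm in}}\varphi(T^k(x))$, assumed finite for every $k$. $G^{>}_\nu=\{k:\nu_k>\limsup_n\nu_n\}$. $\mathcal K$: continuous strictly increasing $\alpha:\mathbb R_+\to\mathbb R_+$ with $\alpha(0)=0$; $\mathcal K_\infty$: those in $\mathcal K$ with $\alpha(x)\to+\infty$. $\mathcal L$: continuous strictly decreasing $\sigma:\mathbb R_+\to\mathbb R_+$ with $\sigma(x)\to0$ as $x\to\infty$. $\mathcal{KL}$: $\gamma:\mathbb R_+\times\mathbb R_+\to\mathbb R_+$ with $\gamma(\cdot,t)\in\mathcal K$ for all $t$ and $\gamma(s,\cdot)\in\mathcal L$ for all $s$. $\Gamma(\nu)=\{(h,\beta):h:\mathbb R\to\mathbb R$ strictly increasing and continuous on $[0,1]$, $\beta\in(0,1)$, $\nu_k\le h(\beta^k)\ \forall k\}$. *)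

(* Defs.v *)
From Stdlib Require Import Reals.
From Stdlib Require Fin.
From Coquelicot Require Import Coquelicot.
Open Scope R_scope.

Definition Rd (d : nat) : Type := Fin.t d -> R.
Definition origin (d : nat) : Rd d := fun _ => 0.

Definition iterT {d : nat} (T : Rd d -> Rd d) (k : nat) (x : Rd d) : Rd d :=
  Nat.iter k T x.

Definition cont_on_nonneg (f : R -> R) : Prop :=
  forall x, 0 <= x ->
    filterlim f (within (fun y => 0 <= y) (locally x)) (locally (f x)).

Definition classK (a : R -> R) : Prop :=
  (forall x, 0 <= x -> 0 <= a x) /\
  cont_on_nonneg a /\
  (forall x y, 0 <= x -> x < y -> a x < a y) /\
  a 0 = 0.

Definition classKinf (a : R -> R) : Prop :=
  classK a /\ is_lim a p_infty p_infty.

Definition classL (s : R -> R) : Prop :=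
  (forall x, 0 <= x -> 0 <= s x) /\
  cont_on_nonneg s /\
  (forall x y, 0 <= x -> x < y -> s y < s x) /\
  is_lim s p_infty 0.

Definition classKL (g : R -> R -> R) : Prop :=
  (forall t, 0 <= t -> classK (fun s => g s t)) /\
  (forall s, 0 < s -> classL (fun t => g s t)).

Definition is_nu {d : nat} (Xin : Rd d -> Prop) (T : Rd d -> Rd d)
  (phi : Rd d -> R) (nu : nat -> R) : Prop :=
  forall k, is_lub (fun y => exists x, Xin x /\ y = phi (iterT T k x)) (nu k).

Definition G_gt (nu : nat -> R) : nat -> Prop :=
  fun k => Rbar_lt (LimSup_seq nu) (nu k).

Definition in_Gamma (nu : nat -> R) (h : R -> R) (beta : R) : Prop :=
  (forall x y, 0 <= x -> x < y -> y <= 1 -> h x < h y) /\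
  (forall x, 0 <= x <= 1 ->
     filterlim h (within (fun y => 0 <= y <= 1) (locally x)) (locally (h x))) /\
  0 < beta < 1 /\
  (forall k, nu k <= h (beta ^ k)).

Definition S_set (nu : nat -> R) (h : R -> R) : nat -> Prop :=
  fun k => nu k > h 0.

(* Main.v *)
Require Import Defs.
From Stdlib Require Import Reals Lra.
From Coquelicot Require Import Coquelicot.
Open Scope R_scope.

Lemma ballR (x e y : R) : ball x e y <-> Rabs (y - x) < e.
Proof. reflexivity. Qed.

Lemma cont_max0 (y : R) : continuous (fun t => Rmax 0 t) y.
Proof.
  unfold continuous. apply filterlim_locally. intros eps.
  exists eps. intros z Hz. rewrite ballR in Hz |- *.
  unfold Rmax; destruct (Rle_dec 0 z), (Rle_dec 0 y);
  unfold Rabs in *; repeat destruct Rcase_abs; lra.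
Qed.

Definition uu (s : R) := Rmax 0 (- ln s).

Lemma uu_nonneg s : 0 <= uu s.
Proof. unfold uu. apply Rmax_l. Qed.

Lemma cont_uu x : 0 < x -> continuous uu x.
Proof.
  intros Hx. unfold uu.
  apply (continuous_comp (fun s => - ln s) (fun t => Rmax 0 t)).
  - apply (continuous_opp ln). now apply continuous_ln.
  - apply cont_max0.
Qed.

Definition hh (g : R -> R) (s : R) :=
  if Rle_dec s 0 then 0 else s + g (uu s).

Section H.
Variable g : R -> R.
Hypothesis gpos : forall t, 0 <= t -> 0 <= g t.
Hypothesis gdec : forall a b, 0 <= a -> a <= b -> g b <= g a.
Hypothesis gcont : cont_on_nonneg g.
Hypothesis glim : is_lim g p_infty 0.

Lemma hh0 : hh g 0 = 0.
Proof. unfold hh; destruct Rle_dec; lra. Qed.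

Lemma hh_pos s : 0 < s -> hh g s = s + g (uu s).
Proof. intros; unfold hh; destruct Rle_dec; lra. Qed.

Lemma hh_cont_pos x : 0 < x -> continuous (hh g) x.
Proof.
  intros Hx.
  assert (C : continuous (fun s => s + g (uu s)) x).
  { apply (continuous_plus (fun s => s) (fun s => g (uu s))).
    apply continuous_id.
    unfold continuous.
    eapply filterlim_comp; [| apply (gcont (uu x) (uu_nonneg x))].
    intros P HP. apply (cont_uu x Hx) in HP.
    unfold filtermap in *. eapply filter_imp; [| exact HP]. intros s Hs. apply Hs, uu_nonneg. }
  unfold continuous. rewrite hh_pos by lra.
  eapply filterlim_ext_loc; [| exact C].
  apply (locally_interval _ x 0 p_infty); simpl; auto.
  intros y Hy _. now rewrite hh_pos.
Qed.

Lemma hh_cont0 : filterlim (hh g) (within (fun y => 0 <= y) (locally 0)) (locally (hh g 0)).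
Proof.
  rewrite hh0. apply filterlim_locally. intros eps.
  assert (He2 : 0 < eps / 2) by (destruct eps; simpl; lra).
  destruct (glim (ball 0 (mkposreal _ He2))) as [M HM].
  { simpl. exists (mkposreal _ He2). auto. }
  assert (Hd : 0 < Rmin (eps/2) (exp (- Rabs M - 1))).
  { apply Rmin_pos; [lra | apply exp_pos]. }
  exists (mkposreal _ Hd). intros y Hy Hy0. rewrite ballR in Hy |- *. simpl in Hy.
  destruct (Req_dec y 0) as [E|E].
  { subst. rewrite hh0. rewrite Rminus_0_r, Rabs_R0. destruct eps; simpl; lra. }
  assert (Ypos : 0 < y) by lra.
  rewrite Rminus_0_r in Hy. rewrite Rabs_right in Hy by lra.
  rewrite hh_pos by lra. rewrite Rminus_0_r.
  assert (Hl : ln y < - Rabs M - 1).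
  { rewrite <- (ln_exp (- Rabs M - 1)). apply ln_increasing; auto.
    pose proof (Rmin_r (eps/2) (exp (- Rabs M - 1))); lra. }
  assert (Hu : M < uu y).
  { unfold uu. eapply Rlt_le_trans; [| apply Rmax_r].
    pose proof (Rle_abs M); lra. }
  specialize (HM _ Hu). rewrite ballR in HM. simpl in HM. rewrite Rminus_0_r in HM.
  pose proof (Rmin_l (eps/2) (exp (- Rabs M - 1))).
  pose proof (gpos _ (uu_nonneg y)).
  rewrite Rabs_right in HM by lra. rewrite Rabs_right by lra. lra.
Qed.

Lemma hh_cont : cont_on_nonneg (hh g).
Proof.
  intros x Hx. destruct (Req_dec x 0) as [E|E].
  - subst. apply hh_cont0.
  - intros P HP. apply (hh_cont_pos x) in HP; [| lra].
    unfold filtermap, within in *. eapply filter_imp; [| exact HP]. auto.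
Qed.

Lemma hh_inc x y : 0 <= x -> x < y -> hh g x < hh g y.
Proof.
  intros Hx Hxy. rewrite (hh_pos y) by lra.
  pose proof (gpos _ (uu_nonneg y)).
  destruct (Req_dec x 0) as [E|E].
  - subst. rewrite hh0. lra.
  - rewrite hh_pos by lra.
    assert (uu y <= uu x).
    { unfold uu. apply Rle_max_compat_l.
      assert (ln x < ln y) by (apply ln_increasing; lra). lra. }
    pose proof (gdec _ _ (uu_nonneg y) H0). lra.
Qed.

Lemma hh_K : classKinf (hh g).
Proof.
  split; [split; [| split; [| split]]|].
  - intros x Hx. destruct (Req_dec x 0) as [E|E].
    + subst; rewrite hh0; lra.
    + left. rewrite <- hh0. apply hh_inc; lra.
  - apply hh_cont.
  - apply hh_inc.
  - apply hh0.
  - unfold is_lim, filterlim, filter_le, filtermap. simpl.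
    intros P [M HM]. exists (Rmax M 0). intros x Hx. apply HM.
    pose proof (Rmax_l M 0). pose proof (Rmax_r M 0).
    rewrite hh_pos by lra. pose proof (gpos _ (uu_nonneg x)). lra.
Qed.

Lemma hh_exp (k : nat) : g (INR k) < hh g (exp (- INR k)).
Proof.
  rewrite hh_pos by apply exp_pos. unfold uu. rewrite ln_exp, Ropp_involutive.
  rewrite Rmax_right by apply pos_INR. pose proof (exp_pos (- INR k)). lra.
Qed.
End H.
Lemma exp_pow (k : nat) : exp (-1) ^ k = exp (- INR k).
Proof.
  induction k. simpl. now rewrite Ropp_0, exp_0.
  rewrite S_INR. simpl. rewrite IHk, <- exp_plus. f_equal; lra.
Qed.
Theorem mainTheorem9 (d : nat) (Xin : Rd d -> Prop) (T : Rd d -> Rd d)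
  (phi : Rd d -> R) (nu : nat -> R)
  (HXin : exists x, Xin x)
  (Hphi0 : phi (origin d) = 0)
  (Hnu : is_nu Xin T phi nu)
  (gamma : R -> R -> R) (psi : Rd d -> R) (psibar : R)
  (Hgamma : classKL gamma)
  (Hpsi : forall x, 0 <= psi x)
  (Hpsibar : is_lub (fun y => exists x, Xin x /\ y = psi x) psibar)
  (Hpsibar_pos : 0 < psibar)
  (Hbound : forall x k, Xin x -> phi (iterT T k x) <= gamma (psi x) (INR k)) :
  (Rbar_le (LimSup_seq nu) 0 /\
   ((exists k x, Xin x /\ phi (iterT T k x) > 0) -> exists k, G_gt nu k)) /\
  (exists h : R -> R,
     classKinf h /\
     (forall k, nu k <= h (exp (- INR k))) /\
     in_Gamma nu h (exp (-1)) /\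
     ((exists k x, Xin x /\ phi (iterT T k x) > 0) -> exists k, S_set nu h k)).

Proof.
  destruct Hgamma as [HK HL].
  set (g := fun t => gamma psibar t).
  destruct (HL psibar Hpsibar_pos) as [gpos [gcont [gsd glim]]].
  assert (gdec : forall a b, 0 <= a -> a <= b -> g b <= g a).
  { intros a b Ha Hab. destruct (Req_dec a b) as [E|E]. subst; lra.
    left. apply gsd; lra. }
  assert (Hnug : forall k, nu k <= g (INR k)).
  { intros k. apply (proj2 (Hnu k)). intros y [x [Hx ->]].
    eapply Rle_trans; [apply Hbound; auto|].
    assert (psi x <= psibar) by (apply (proj1 Hpsibar); eauto).
    destruct (HK (INR k) (pos_INR k)) as [_ [_ [Hinc _]]].
    destruct (Req_dec (psi x) psibar) as [E|E]. rewrite E; unfold g; lra.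
    left. apply Hinc; auto; lra. }
  assert (Hpos : (exists k x, Xin x /\ phi (iterT T k x) > 0) -> exists k, nu k > 0).
  { intros [k [x [Hx Hp]]]. exists k. apply Rlt_gt. eapply Rlt_le_trans; [apply Hp|].
    apply (proj1 (Hnu k)). eauto. }
  assert (HLS : Rbar_le (LimSup_seq nu) 0).
  { eapply Rbar_le_trans. apply (LimSup_le nu (fun n => g (INR n))).
    exists 0%nat. intros; apply Hnug.
    rewrite (is_LimSup_seq_unique _ 0). apply Rbar_le_refl.
    apply is_lim_LimSup_seq. eapply is_lim_comp_seq; [exact glim| |apply is_lim_seq_INR].
    exists 0%nat; intros; discriminate. }
  split; [split|].
  - exact HLS.
  - intros H. destruct (Hpos H) as [k Hk]. exists k. unfold G_gt.
    destruct (LimSup_seq nu); simpl in *; auto; lra.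
  - exists (hh g).
    assert (Hh : forall k, nu k <= hh g (exp (- INR k))).
    { intros k. pose proof (hh_exp g k). pose proof (Hnug k). lra. }
    pose proof (hh_K g gpos gdec gcont glim) as HK'.
    split; [exact HK'|]. split; [exact Hh|]. split.
    + destruct HK' as [[_ [Hc [Hi _]]] _]. split; [|split; [|split]].
      * intros x y Hx Hxy _. apply Hi; auto.
      * intros x Hx P HP. apply (Hc x (proj1 Hx)) in HP.
        unfold filtermap, within in *. eapply filter_imp; [| exact HP].
        intros y Hy Hy'. apply Hy, Hy'.
      * split; [apply exp_pos|]. rewrite <- exp_0. apply exp_increasing. lra.
      * intros k. rewrite exp_pow. apply Hh.
    + intros H. destruct (Hpos H) as [k Hk]. exists k. unfold S_set.
      rewrite hh0. exact Hk.
Qed.
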